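(* Let $\hat\Omega$ be a compact set with connected interior containing $0$ and equal to the closure of its interior, $\mathcal{T}=\{\sigma_i\}_{i=1}^{m_{\mathcal{T}}}$ a triangulation of $\hat\Omega$, $f:\hat\Omega\to\mathbb{R}^n$, $G:\hat\Omega\to\mathbb{R}^{n\times m}$ continuous and $\mathcal{C}^2$ on each simplex, $\mathbb{I}_1\subseteq\mathbb{Z}_1^{m_{\mathcal{T}}}$ the index set defined in the context, and $\beta_i,\hat g_i,c_{i,j}$ as in the context. Let $\mathbf{y}=[\mathbf{W},\hat{\mathbf{L}},b_2,\hat u]$, with $\mathbf{W}=\{W_x\}_{x\in\mathbb{E}_{\mathcal{T}}}$ and $\hat{\mathbf{L}}=\{\hat l_i\}\subset\mathbb{R}^n$, be a feasible point of system (B): $\hat u>0$; $W_x>0$ for all $x\in\mathbb{E}_{\mathcal{T}}$; $|\nabla W_i|\le\hat l_i$ componentwise for all $i$; $f(x_{i,j})^\intercal\nabla W_i+(1_n^\intercal\hat l_i)(\beta_ic_{i,j}+\hat g_i\hat u)\le -b_2$ for all $i\in\mathbb{I}_1$, $j\in\mathbb{Z}_0^n$. Let $J$ be a cost function and consider minimizing $J(\mathbf{y}+\delta\mathbf{y})$ over $\delta\mathbf{y}=[\delta\mathbf{W},\delta\hat{\mathbf{L}},\delta b_2,\delta\hat u]$ subject to: $\hat u+\delta\hat u>0$; $W_x+\delta W_x>0$ for all $x\in\mathbb{E}_{\mathcal{T}}$; $|\nabla W_i+\delta\nabla W_i|\le\hat l_i+\delta\hat l_i$ componentwise for all $i$,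 with $\delta\nabla W_i=X_i^{-1}\delta\bar W_i$; and $Q_{i,j}\preceq0$ for all $i\in\mathbb{I}_1$, $j\in\mathbb{Z}_0^n$, where $$Q_{i,j}=\begin{bmatrix}\varphi_{i,j}+b_2+\delta b_2 & 1_n^\intercal\delta\hat l_i & \hat g_i\delta\hat u\\ 1_n^\intercal\delta\hat l_i & -2 & 0\\ \hat g_i\delta\hat u & 0 & -2\end{bmatrix},$$ $\varphi_{i,j}=f(x_{i,j})^\intercal(\nabla W_i+\delta\nabla W_i)+1_n^\intercal(\hat l_i+\delta\hat l_i)(\beta_ic_{i,j}+\hat g_i\hat u)+1_n^\intercal\hat l_i\,\hat g_i\,\delta\hat u$. Then for every feasible $\delta\mathbf{y}$ of this problem, $\mathbf{y}+\delta\mathbf{y}$ is a feasible point of (B); and if $\delta\mathbf{y}^\ast$ is an optimal solution, then $J(\mathbf{y}+\delta\mathbf{y}^\ast)\le J(\mathbf{y})$.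
   Context: A triangulation is a finite collection of $n$-simplexes $\sigma_i=\mathrm{co}(\{x_{i,j}\}_{j=0}^n)$ (affinely independent vertices) covering the set, pairwise meeting in common faces or not at all; $\mathbb{E}_{\mathcal{T}}$ is its vertex set; $x_{i,0}=0$ whenever $0\in\sigma_i$. A set $\mathcal{A}_1\subset\hat\Omega$ (compact, connected interior containing $0$, closure of its interior) whose boundary lies in the union of simplex boundaries is given, and $\mathbb{I}_1=\{i:\sigma_i\not\subseteq\mathcal{A}_1\}$. Constants: $\beta_i\ge\max_{p,q,r}\max_{\xi\in\sigma_i}|\partial^2 f^{(p)}/\partial x^{(q)}\partial x^{(r)}(\xi)|$; $\hat g_i=\max_{x\in\sigma_i}\|G(x)\|_\infty$ (induced $\infty$-norm); $c_{i,j}=\tfrac n2\|x_{i,j}-x_{i,0}\|_2(\max_{k\in\mathbb{Z}_1^n}\|x_{i,k}-x_{i,0}\|_2+\|x_{i,j}-x_{i,0}\|_2)$. $X_i$ has rows $(x_{i,j}-x_{i,0})^\intercal$; $\bar W_i$ (resp. $\delta\bar W_i$) has entries $W_{x_{i,j}}-W_{x_{i,0}}$ (resp. with $\delta W$); $\nabla W_i=X_i^{-1}\bar W_i$. $1_n$ is the all-ones vector, $|v|$ componentwise absolute value, $\preceq0$ negative semidefinite. *)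

(* Defs.v *)
From HB Require Import structures.
From mathcomp Require Import all_boot all_order all_algebra.
From mathcomp Require Import all_classical all_reals all_analysis.
Set Implicit Arguments. Unset Strict Implicit. Unset Printing Implicit Defensive.
Import Order.TTheory GRing.Theory Num.Theory.
Import numFieldNormedType.Exports.
Local Open Scope classical_set_scope.
Local Open Scope ring_scope.

Section Defs.
Variable R : realType.
Variable n : nat.
Notation pt := 'cV[R]_n.

Definition ebasis (q : 'I_n) : pt := delta_mx q 0.

Definition norm2 (v : pt) : R := Num.sqrt (\sum_(k < n) v k 0 ^+ 2).

Definition mx_inf_norm (m : nat) (A : 'M[R]_(n, m)) : R :=
  \big[Order.max/0]_(p < n) \sum_(q < m) `|A p q|.

Definition simplex (v : 'I_n.+1 -> pt) : set pt :=
  [set y | exists lam : 'I_n.+1 -> R, (forall j, 0 <= lam j) /\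
     \sum_(j < n.+1) lam j = 1 /\ y = \sum_(j < n.+1) lam j *: v j].

Definition subhull (v : 'I_n.+1 -> pt) (S : set pt) : set pt :=
  [set y | exists lam : 'I_n.+1 -> R, (forall j, 0 <= lam j) /\
     (forall j, ~ S (v j) -> lam j = 0) /\
     \sum_(j < n.+1) lam j = 1 /\ y = \sum_(j < n.+1) lam j *: v j].

Definition Xmat (v : 'I_n.+1 -> pt) : 'M[R]_n :=
  \matrix_(j < n, k < n) (v (lift ord0 j) - v ord0) k 0.

Definition vertset (v : 'I_n.+1 -> pt) : set pt := [set y | exists j, y = v j].

Definition triangulation (mT : nat) (x : 'I_mT -> 'I_n.+1 -> pt) (Om : set pt) :=
  [/\ (forall i, Xmat (x i) \in unitmx),               (* affinely independent *)
      \bigcup_(i in [set: 'I_mT]) simplex (x i) = Om,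
      (forall i k, i != k ->                             (* meet in common faces or not at all *)
         simplex (x i) `&` simplex (x k) = subhull (x i) (vertset (x k))) &
      (forall i, simplex (x i) 0 -> x i ord0 = 0)].

Definition admissible_domain (Om : set pt) :=
  [/\ compact Om, connected (interior Om), interior Om 0 & closure (interior Om) = Om].

Definition boundary (A : set pt) : set pt := closure A `\` interior A.

Definition C2_on (U : set pt) (g : pt -> R) :=
  [/\ forall x, U x -> forall r, derivable g x (ebasis r),
      forall x, U x -> forall q r, derivable ('D_(ebasis r) g) x (ebasis q),
      {within U, continuous g},
      forall r, {within U, continuous ('D_(ebasis r) g)} &
      forall q r, {within U, continuous ('D_(ebasis q) ('D_(ebasis r) g))}].

Definition vcomp (m : nat) (F : pt -> 'cV[R]_m) (p : 'I_m) : pt -> R := fun x => F x p 0.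
Definition mcomp (m : nat) (F : pt -> 'M[R]_(n, m)) (p : 'I_n) (q : 'I_m) : pt -> R :=
  fun x => F x p q.

Record dec (mT : nat) := Dec {
  dW : pt -> R;              (* W_x, relevant at the vertices *)
  dL : 'I_mT -> pt;
  db2 : R;
  du : R }.

Definition dec_add (mT : nat) (y d : dec mT) : dec mT :=
  Dec (fun x => dW y x + dW d x) (fun i => dL y i + dL d i) (db2 y + db2 d) (du y + du d).

Definition dec0 (mT : nat) : dec mT := Dec (fun _ => 0) (fun _ => 0) 0 0.

Definition Wbar (mT : nat) (x : 'I_mT -> 'I_n.+1 -> pt) (W : pt -> R) (i : 'I_mT) : pt :=
  \col_(j < n) (W (x i (lift ord0 j)) - W (x i ord0)).

Definition gradW (mT : nat) (x : 'I_mT -> 'I_n.+1 -> pt) (W : pt -> R) (i : 'I_mT) : pt :=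
  invmx (Xmat (x i)) *m Wbar x W i.

Definition dotv (a b : pt) : R := \sum_(k < n) a k 0 * b k 0.
Definition sum1 (a : pt) : R := \sum_(k < n) a k 0.

Definition cij (v : 'I_n.+1 -> pt) (j : 'I_n.+1) : R :=
  n%:R / 2 * norm2 (v j - v ord0) *
  (\big[Order.max/0]_(k < n) norm2 (v (lift ord0 k) - v ord0) + norm2 (v j - v ord0)).

Definition feasB (mT : nat) (x : 'I_mT -> 'I_n.+1 -> pt) (f : pt -> pt)
    (I1 : set 'I_mT) (beta ghat : 'I_mT -> R) (y : dec mT) :=
  [/\ 0 < du y,
      (forall i j, 0 < dW y (x i j)),
      (forall i k, `|gradW x (dW y) i k 0| <= dL y i k 0) &
      (forall i j, I1 i ->
         dotv (f (x i j)) (gradW x (dW y) i) +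
         sum1 (dL y i) * (beta i * cij (x i) j + ghat i * du y) <= - db2 y)].

Definition nsd (k : nat) (Q : 'M[R]_k) := forall v : 'cV[R]_k, (v^T *m Q *m v) 0 0 <= 0.

Definition Qmat (mT : nat) (x : 'I_mT -> 'I_n.+1 -> pt) (f : pt -> pt)
    (beta ghat : 'I_mT -> R) (y d : dec mT) (i : 'I_mT) (j : 'I_n.+1) : 'M[R]_3 :=
  let phi := dotv (f (x i j)) (gradW x (dW y) i + gradW x (dW d) i)
             + sum1 (dL y i + dL d i) * (beta i * cij (x i) j + ghat i * du y)
             + sum1 (dL y i) * ghat i * du d in
  let a := sum1 (dL d i) in
  let g := ghat i * du d in
  \matrix_(r < 3, s < 3)
    nth 0 (nth [::] [:: [:: phi + db2 y + db2 d; a; g];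
                        [:: a; -2; 0];
                        [:: g; 0; -2]] r) s.

Definition feasP (mT : nat) (x : 'I_mT -> 'I_n.+1 -> pt) (f : pt -> pt)
    (I1 : set 'I_mT) (beta ghat : 'I_mT -> R) (y d : dec mT) :=
  [/\ 0 < du y + du d,
      (forall i j, 0 < dW y (x i j) + dW d (x i j)),
      (forall i k, `|(gradW x (dW y) i + invmx (Xmat (x i)) *m Wbar x (dW d) i) k 0|
                   <= (dL y i + dL d i) k 0) &
      (forall i j, I1 i -> nsd (Qmat x f beta ghat y d i j))].

End Defs.
Arguments ebasis {R n}.

(* Main.v *)
Require Import Defs.
From HB Require Import structures.
From mathcomp Require Import all_boot all_order all_algebra.
From mathcomp Require Import all_classical all_reals all_analysis.
From mathcomp Require Import ring lra.
Import Order.TTheory GRing.Theory Num.Theory.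
Import numFieldNormedType.Exports.
Local Open Scope classical_set_scope.
Local Open Scope ring_scope.


Section Helpers.
Variable R : realType.
Variable n mT : nat.

Lemma Wbar_add (x : 'I_mT -> 'I_n.+1 -> 'cV[R]_n) (W V : 'cV[R]_n -> R) i :
  Wbar x (fun z => W z + V z) i = Wbar x W i + Wbar x V i.
Proof. by apply/matrixP => a b; rewrite !mxE; lra. Qed.

Lemma Wbar0 (x : 'I_mT -> 'I_n.+1 -> 'cV[R]_n) i :
  Wbar x (fun _ => (0:R)) i = 0.
Proof. by apply/matrixP => a b; rewrite !mxE subrr. Qed.

Lemma gradW_add (x : 'I_mT -> 'I_n.+1 -> 'cV[R]_n) (W V : 'cV[R]_n -> R) i :
  gradW x (fun z => W z + V z) i = gradW x W i + invmx (Xmat (x i)) *m Wbar x V i.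
Proof. by rewrite /gradW Wbar_add mulmxDr. Qed.

Lemma gradW0 (x : 'I_mT -> 'I_n.+1 -> 'cV[R]_n) i :
  gradW x (fun _ => (0:R)) i = 0.
Proof. by rewrite /gradW Wbar0 mulmx0. Qed.

Lemma sum1D (a b : 'cV[R]_n) : sum1 (a + b) = sum1 a + sum1 b.
Proof. by rewrite /sum1 -big_split; apply: eq_bigr => k _; rewrite mxE. Qed.

Lemma sum10 : sum1 (0 : 'cV[R]_n) = 0.
Proof. by rewrite /sum1 big1 // => k _; rewrite mxE. Qed.

Lemma dotvD (c a b : 'cV[R]_n) : dotv c (a + b) = dotv c a + dotv c b.
Proof. by rewrite /dotv -big_split; apply: eq_bigr => k _; rewrite mxE mulrDr. Qed.

Lemma dotv0 (c : 'cV[R]_n) : dotv c 0 = 0.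
Proof. by rewrite /dotv big1 // => k _; rewrite mxE mulr0. Qed.

Definition v3 (a b c : R) : 'cV[R]_3 := \col_(i < 3) nth 0 [:: a; b; c] i.

Lemma quad3 (p a g t s : R) :
  let Q : 'M[R]_3 := \matrix_(r < 3, s < 3)
    nth 0 (nth [::] [:: [:: p; a; g]; [:: a; -2; 0]; [:: g; 0; -2]] r) s in
  ((v3 1 t s)^T *m Q *m v3 1 t s) 0 0 =
    p + 2 * a * t + 2 * g * s - 2 * t ^+ 2 - 2 * s ^+ 2.
Proof.
move=> Q; rewrite /Q /v3 !mxE !big_ord_recl big_ord0 /=.
rewrite !mxE !big_ord_recl !big_ord0 /= !mxE /=.
rewrite /bump /=. ring.
Qed.

End Helpers.
Arguments v3 {R}.

Theorem theorem5 (R : realType) (n m mT : nat)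
  (Om : set 'cV[R]_n) (x : 'I_mT -> 'I_n.+1 -> 'cV[R]_n)
  (f : 'cV[R]_n -> 'cV[R]_n) (G : 'cV[R]_n -> 'M[R]_(n, m))
  (A1 : set 'cV[R]_n) (beta ghat : 'I_mT -> R) (y : dec R n mT) (J : dec R n mT -> R) :
  admissible_domain Om ->
  triangulation x Om ->
  {within Om, continuous f} ->
  {within Om, continuous G} ->
  (* f is C^2 on each simplex, and beta_i bounds its second partials there *)
  (forall i : 'I_mT, exists (U : set 'cV[R]_n) (fi : 'cV[R]_n -> 'cV[R]_n),
     [/\ open U, simplex (x i) `<=` U,
         (forall xi, simplex (x i) xi -> fi xi = f xi),
         (forall p : 'I_n, C2_on U (vcomp fi p)) &
         (forall xi, simplex (x i) xi -> forall p q r : 'I_n,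
            `|'D_(ebasis q) ('D_(ebasis r) (vcomp fi p)) xi| <= beta i)]) ->
  (* G is C^2 on each simplex *)
  (forall i : 'I_mT, exists (U : set 'cV[R]_n) (Gi : 'cV[R]_n -> 'M[R]_(n, m)),
     [/\ open U, simplex (x i) `<=` U,
         (forall xi, simplex (x i) xi -> Gi xi = G xi) &
         (forall (p : 'I_n) (q : 'I_m), C2_on U (mcomp Gi p q))]) ->
  (* ghat_i = max_{x in sigma_i} ||G(x)||_inf *)
  (forall i : 'I_mT,
     (forall xi, simplex (x i) xi -> mx_inf_norm (G xi) <= ghat i) /\
     (exists2 xi, simplex (x i) xi & mx_inf_norm (G xi) = ghat i)) ->
  (* the set A_1 *)
  A1 `<=` Om -> admissible_domain A1 ->
  boundary A1 `<=` \bigcup_(i in [set: 'I_mT]) boundary (simplex (x i)) ->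
  (* y is feasible for (B), with I_1 = {i | sigma_i not included in A_1} *)
  feasB x f [set i | ~ (simplex (x i) `<=` A1)] beta ghat y ->
  (forall d : dec R n mT,
     feasP x f [set i | ~ (simplex (x i) `<=` A1)] beta ghat y d ->
     feasB x f [set i | ~ (simplex (x i) `<=` A1)] beta ghat (dec_add y d)) /\
  (forall dstar : dec R n mT,
     feasP x f [set i | ~ (simplex (x i) `<=` A1)] beta ghat y dstar ->
     (forall d : dec R n mT,
        feasP x f [set i | ~ (simplex (x i) `<=` A1)] beta ghat y d ->
        J (dec_add y dstar) <= J (dec_add y d)) ->
     J (dec_add y dstar) <= J y).
Proof.
move=> _ _ _ _ _ _ _ _ _ _ [hu hW hL hQ].
split.
- move=> d [du1 dW1 dL1 dQ]; split => //=.
  + move=> i k; rewrite gradW_add; exact: dL1.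
  + move=> i j Ii; have := dQ i j Ii (v3 1 (sum1 (dL d i) / 2) (ghat i * du d / 2)).
    rewrite quad3 gradW_add /=.
    set a := sum1 (dL d i); set g := ghat i * du d.
    set P := dotv _ _ + _ + _.
    move=> HQ.
    have -> : sum1 (dL y i + dL d i) * (beta i * cij (x i) j + ghat i * (du y + du d))
      = sum1 (dL y i + dL d i) * (beta i * cij (x i) j + ghat i * du y)
        + sum1 (dL y i) * ghat i * du d + a * g.
      by rewrite /a /g sum1D; ring.
    rewrite -/P in HQ *.
    have : 0 <= (a - g) ^+ 2 by apply: sqr_ge0.
    move=> sq.
    have E : gradW x (dW d) i = invmx (Xmat (x i)) *m Wbar x (dW d) i by [].
    have e1 : P + db2 y + db2 d + 2 * a * (a / 2) + 2 * g * (g / 2) - 2 * (a / 2) ^+ 2 -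
      2 * (g / 2) ^+ 2 = P + db2 y + db2 d + (a ^+ 2 + g ^+ 2) / 2 by field.
    have e2 : (a - g) ^+ 2 = a ^+ 2 - 2 * (a * g) + g ^+ 2 by ring.
    rewrite e1 in HQ; rewrite e2 in sq.
    rewrite -E; move: HQ sq; rewrite /P; clear e1 e2; lra.
- move=> ds _ Hopt.
  have e : dec_add y (dec0 R n mT) = y.
    case: y {hu hW hL hQ Hopt} => W L b u; rewrite /dec_add /=.
    congr Dec; first (apply: funext => z; exact: addr0).
    + apply: funext => z; exact: addr0.
    + exact: addr0.
    + exact: addr0.
  rewrite -{2}e; apply: Hopt; split => /=.
  + by rewrite addr0.
  + by move=> i j; rewrite addr0.
  + by move=> i k; rewrite Wbar0 mulmx0 !addr0.
  + move=> i j Ii v; rewrite /Qmat /=.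
    rewrite gradW0 !addr0 mulr0 sum10 mulr0.
    have := hQ i j Ii.
    set p := dotv _ _ + _.
    move=> hp.
    rewrite !mxE !big_ord_recl big_ord0 /= !mxE !big_ord_recl !big_ord0 /= !mxE /=.
    rewrite /bump /=.
    have h1 : 0 <= v ord0 0 ^+ 2 by apply: sqr_ge0.
    nra.
Qed.
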